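(* Let $R$ be a commutative noetherian semilocal ring with Jacobson radical $J$ which is $J$-adically complete. Let $\mathscr{M}$ be a $\mathcal{B}$-diagram in the category of $R$-modules such that $\mathscr{M}(\sigma)$ is finitely generated and $\mathrm{im}(\mathscr{M}(\mho_\sigma))\subseteq\ker(\mathscr{M}(\Omega_\sigma))$ for every vertex $\sigma$ of $\mathcal{B}$. If $0\neq m\in\mathscr{M}(\emptyset)$, then there exists a ray $\overline{\sigma}=(\sigma^i)$ in $\mathcal{B}$ such that exactly one of the following holds: (1) there exists $j\in\mathbb{N}$ such that $m\in\widetilde{\mu}_{\leq j}\ker(\mathscr{M}(\Omega_{\sigma^j}))\setminus\widetilde{\mu}_{\leq j}\,\mathrm{im}(\mathscr{M}(\mho_{\sigma^j}))$; (2) there exists $(m_i)\in\prod_{i\in\mathbb{N}}M[i]$ with $m_0=m$ and $(m_i,m_{i-1})\in\widetilde{\mu}_i$ for all $i>0$, but $m\notin\bigcup_{i\in\mathbb{N}}\widetilde{\mu}_{\leq i}0$.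
   Context: The quiver $\mathcal{B}$: its vertices are the finite sequences of $0$'s and $1$'s (including the empty sequence $\emptyset$, the root); for each vertex $\sigma$ there are arrows $\Omega_\sigma\colon\sigma\to\sigma1$ and $\mho_\sigma\colon\sigma0\to\sigma$, where $\sigma1,\sigma0$ denote $\sigma$ extended on the right by $1$, resp. $0$. A $\mathcal{B}$-diagram $\mathscr{M}$ in $R$-modules assigns an $R$-module to each vertex and an $R$-linear map to each arrow. A ray is a sequence $(\sigma^0,\sigma^1,\dots)$ of vertices with $\sigma^0=\emptyset$ and $\sigma^{i}$ equal to $\sigma^{i-1}$ extended by one symbol; write $\sigma_i=+$ if that symbol is $1$ and $\sigma_i=-$ if it is $0$. Given a ray, put $M[i]=\mathscr{M}(\sigma^i)$ and, for $i\geq1$, let $\mu_i$ be the image under $\mathscr{M}$ of the arrow between $\sigma^{i-1}$ and $\sigma^i$: so $\mu_i=\mathscr{M}(\mho_{\sigma^{i-1}})\colon M[i]\to M[i-1]$ if $\sigma_i=-$, and $\mu_i=\mathscr{M}(\Omega_{\sigma^{i-1}})\colon M[i-1]\to M[i]$ if $\sigma_i=+$. Define the relation $\widetilde{\mu}_i\subseteq M[i]\oplus M[i-1]$ by $\widetilde{\mu}_i=\{(x,\mu_i(x)):x\in M[i]\}$ if $\sigma_i=-$ and $\widetilde{\mu}_i=\{(\mu_i(y),y):y\in M[i-1]\}$ if $\sigma_i=+$. For $S\subseteq M[n]$, $\widetilde{\mu}_{\leq 0}S=S$ (for $n=0$) and, for $n>0$, $\widetilde{\mu}_{\leq n}S$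 is the set of $m_0\in M[0]$ for which there are $m_i\in M[i]$ ($1\le i\le n$) with $m_n\in S$ and $(m_i,m_{i-1})\in\widetilde{\mu}_i$ for $1\leq i\leq n$. Here $\widetilde{\mu}_{\leq i}0$ means $\widetilde{\mu}_{\leq i}\{0\}$. *)

(* Defs.v *)
From HB Require Import structures.
From mathcomp Require Import all_boot all_order all_algebra.
Set Implicit Arguments. Unset Strict Implicit. Unset Printing Implicit Defensive.
Import GRing.Theory.
Local Open Scope ring_scope.

Section Ring.
Variable R : comNzRingType.

Definition is_ideal (I : R -> Prop) : Prop :=
  I 0 /\ (forall x y, I x -> I y -> I (x + y)) /\ (forall a x, I x -> I (a * x)).

Definition is_maximal_ideal (I : R -> Prop) : Prop :=
  is_ideal I /\ ~ I 1 /\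
  forall K, is_ideal K -> (forall x, I x -> K x) -> (forall x, K x -> I x) \/ K 1.

Definition noetherian_ring : Prop :=
  forall I, is_ideal I ->
    exists (k : nat) (g : 'I_k -> R),
      forall x, I x <-> exists c : 'I_k -> R, x = \sum_(i < k) c i * g i.

Definition semilocal_ring : Prop :=
  exists (n : nat) (f : 'I_n -> R -> Prop),
    forall I, is_maximal_ideal I -> exists i, forall x, I x <-> f i x.

Definition jacobson_radical (x : R) : Prop :=
  forall I, is_maximal_ideal I -> I x.

Definition ideal_mul (I K : R -> Prop) (x : R) : Prop :=
  exists (k : nat) (a b : 'I_k -> R),
    (forall i, I (a i)) /\ (forall i, K (b i)) /\ x = \sum_(i < k) a i * b i.

Fixpoint ideal_pow (I : R -> Prop) (n : nat) : R -> Prop :=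
  match n with
  | 0 => fun _ => True
  | n.+1 => ideal_mul I (ideal_pow I n)
  end.

Definition adically_complete (I : R -> Prop) : Prop :=
  (forall x, (forall n, ideal_pow I n x) -> x = 0) /\
  (forall u : nat -> R, (forall n, ideal_pow I n (u n.+1 - u n)) ->
     exists x, forall n, ideal_pow I n (x - u n)).

Definition fin_gen_module (M : lmodType R) : Prop :=
  exists (k : nat) (g : 'I_k -> M),
    forall x, exists c : 'I_k -> R, x = \sum_(i < k) c i *: g i.

End Ring.

(** B-diagrams in R-modules: vertices are finite 0/1 sequences (seq bool,
    true = 1, false = 0); Omega s : M s -> M (s1), Mho s : M (s0) -> M s. *)
Record Bdiagram (R : comNzRingType) := {
  Bmod : seq bool -> lmodType R;
  BOmega : forall s, {linear Bmod s -> Bmod (rcons s true)};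
  BMho : forall s, {linear Bmod (rcons s false) -> Bmod s}
}.

Section Rays.
Variable R : comNzRingType.
Variable D : Bdiagram R.

(** A ray is determined by its infinite bit sequence b; its i-th vertex. *)
Fixpoint ray_vertex (b : nat -> bool) (n : nat) : seq bool :=
  match n with
  | 0 => [::]
  | n.+1 => rcons (ray_vertex b n) (b n)
  end.

(** The relation ~mu for the arrow between s and (rcons s c):
    (x, y) in ~mu  with x in M(rcons s c), y in M(s). *)
Definition mu_rel (s : seq bool) (c : bool) :
    Bmod D (rcons s c) -> Bmod D s -> Prop :=
  if c as c0 return Bmod D (rcons s c0) -> Bmod D s -> Prop then
    fun x y => x = BOmega D s y
  else
    fun x y => y = BMho D s x.

Definition mu_le (b : nat -> bool) (n : nat)
    (S : Bmod D (ray_vertex b n) -> Prop) (m0 : Bmod D [::]) : Prop :=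
  exists m : forall i, Bmod D (ray_vertex b i),
    m 0%N = m0 /\ S (m n) /\
    forall i, (i < n)%N -> @mu_rel (ray_vertex b i) (b i) (m i.+1) (m i).

Definition ker_Omega (s : seq bool) (x : Bmod D s) : Prop := BOmega D s x = 0.
Definition im_Mho (s : seq bool) (x : Bmod D s) : Prop :=
  exists y, BMho D s y = x.
Definition zero_set (s : seq bool) (x : Bmod D s) : Prop := x = 0.

End Rays.

Arguments mu_rel {R} D s c x y.
Arguments mu_le {R} D b n S m0.
Arguments ker_Omega {R} D s x.
Arguments im_Mho {R} D s x.
Arguments zero_set {R} D s x.

(* Main.v *)
Require Import Defs.
From HB Require Import structures.
From mathcomp Require Import all_boot all_order all_algebra.
Import GRing.Theory.
Local Open Scope ring_scope.

From mathcomp Require Import all_boot all_order all_algebra.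
From Stdlib Require Import Classical ClassicalEpsilon.
Set Implicit Arguments. Unset Strict Implicit. Unset Printing Implicit Defensive.

Inductive fsum (V : zmodType) (P : V -> Prop) : V -> Prop :=
| fs0 : fsum P 0
| fsS x y : P x -> fsum P y -> fsum P (x + y).

Section FS.
Variable V : zmodType.
Implicit Types P Q : V -> Prop.

Lemma fsum_one P x : P x -> fsum P x.
Proof. by move=> Px; rewrite -[x]addr0; apply: fsS => //; apply: fs0. Qed.

Lemma fsum_add P x y : fsum P x -> fsum P y -> fsum P (x + y).
Proof.
elim=> [|a b Pa _ IH] Hy; first by rewrite add0r.
by rewrite -addrA; apply: fsS => //; apply: IH.
Qed.

Lemma fsum_mono P Q x : (forall y, P y -> Q y) -> fsum P x -> fsum Q x.
Proof. by move=> H; elim=> [|a b Pa _ IH]; [apply: fs0|apply: fsS => //; apply: H]. Qed.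

Lemma fsum_closed P Q x : Q 0 -> (forall a b, Q a -> Q b -> Q (a + b)) ->
  (forall y, P y -> Q y) -> fsum P x -> Q x.
Proof. by move=> Q0 QD H; elim=> // a b Pa _ IH; apply: QD => //; apply: H. Qed.

Lemma fsum_flat P x : fsum (fsum P) x -> fsum P x.
Proof.
apply: fsum_closed; [exact: fs0| exact: fsum_add| by []].
Qed.

Lemma fsum_morph (W : zmodType) (f : V -> W) P (Q : W -> Prop) x :
  f 0 = 0 -> (forall a b, f (a + b) = f a + f b) ->
  (forall y, P y -> Q (f y)) -> fsum P x -> fsum Q (f x).
Proof.
move=> f0 fD H; elim=> [|a b Pa _ IH]; first by rewrite f0; apply: fs0.
by rewrite fD; apply: fsS => //; apply: H.
Qed.

Lemma fsum_big P k (F : 'I_k -> V) : (forall i, P (F i)) -> fsum P (\sum_(i < k) F i).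
Proof.
elim: k F => [|k IH] F H; first by rewrite big_ord0; apply: fs0.
by rewrite big_ord_recl; apply: fsS => //; apply: IH.
Qed.

Lemma fsum_to_big P x : fsum P x -> exists k (F : 'I_k -> V),
  (forall i, P (F i)) /\ x = \sum_(i < k) F i.
Proof.
elim=> [|a b Pa _ [k [F [HF ->]]]]; first by exists 0%N, (fun _ => 0); split=> [[]//|]; rewrite big_ord0.
exists k.+1, (fun i => match unlift ord0 i with None => a | Some j => F j end).
split.
  by move=> i; case: (unlift ord0 i).
rewrite big_ord_recl unlift_none; congr (_ + _).
by apply: eq_bigr => i _; rewrite liftK.
Qed.

End FS.

Section Mod.
Variable R : comNzRingType.
Variable M : lmodType R.

Definition submod (N : M -> Prop) :=
  N 0 /\ (forall x y, N x -> N y -> N (x + y)) /\ (forall (a : R) x, N x -> N (a *: x)).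

Lemma submodN N x : submod N -> N x -> N (- x).
Proof. by move=> [_ [_ HZ]] Hx; rewrite -scaleN1r; apply: HZ. Qed.

Lemma submodB N x y : submod N -> N x -> N y -> N (x - y).
Proof. by move=> HN Hx Hy; case: (HN) => _ [HD _]; apply: HD => //; apply: submodN. Qed.

Lemma submod_fsum N P x : submod N -> (forall y, P y -> N y) -> fsum P x -> N x.
Proof. by move=> [H0 [HD _]]; apply: fsum_closed. Qed.

Definition mprod (I : R -> Prop) (X : M -> Prop) : M -> Prop :=
  fsum (fun y => exists a x, I a /\ X x /\ y = a *: x).

Lemma mprod_sub I X : is_ideal I -> submod (mprod I X).
Proof.
move=> [I0 [ID IM]]; split; first exact: fs0.
split; first by move=> x y; apply: fsum_add.
move=> r x; apply: fsum_morph; [exact: scaler0| exact: scalerDr|].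
by move=> y [a [z [Ia [Xz ->]]]]; exists (r * a), z; rewrite scalerA; split=> //; apply: IM.
Qed.

Lemma mprod_le I X x : submod X -> mprod I X x -> X x.
Proof.
move=> HX; apply: submod_fsum => // y [a [z [_ [Xz ->]]]].
by case: HX => _ [_ HZ]; apply: HZ.
Qed.

Definition lc n (c : nat -> R) (h : nat -> M) := \sum_(i < n) c i *: h i.

Lemma lcS n c h : lc n.+1 c h = lc n c h + c n *: h n.
Proof. by rewrite /lc big_ord_recr. Qed.

Lemma lc0 c h : lc 0 c h = 0.
Proof. by rewrite /lc big_ord0. Qed.

Lemma lcD n c d h : lc n (fun i => c i + d i) h = lc n c h + lc n d h.
Proof. by rewrite /lc -big_split; apply: eq_bigr => i _; rewrite scalerDl. Qed.

Lemma lcZ n a c h : a *: lc n c h = lc n (fun i => a * c i) h.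
Proof. by rewrite /lc scaler_sumr; apply: eq_bigr => i _; rewrite scalerA. Qed.

Lemma lcN n c h : - lc n c h = lc n (fun i => - c i) h.
Proof. by rewrite -scaleN1r lcZ; apply: eq_bigr => i _; rewrite mulN1r. Qed.

Lemma lc_ext n c d h : (forall i, (i < n)%N -> c i = d i) -> lc n c h = lc n d h.
Proof. by move=> H; apply: eq_bigr => i _; rewrite H. Qed.

Lemma lc_sub n c h N : submod N -> (forall i, (i < n)%N -> N (h i)) -> N (lc n c h).
Proof.
move=> [N0 [ND NZ]] H; rewrite /lc; elim: n H => [|n IH] H; first by rewrite big_ord0.
by rewrite big_ord_recr; apply: ND; [apply: IH => i Hi; apply: H; apply: ltnW|apply: NZ; apply: H].
Qed.

Definition fg (N : M -> Prop) :=
  exists n h, (forall x, N x <-> exists c, x = lc n c h).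

Definition happ n (h1 h2 : nat -> M) := fun i => if (i < n)%N then h1 i else h2 (i - n)%N.

Lemma lc_app n1 n2 c1 c2 h1 h2 :
  lc n1 c1 h1 + lc n2 c2 h2 = lc (n1 + n2) (fun i => if (i < n1)%N then c1 i else c2 (i - n1)%N) (happ n1 h1 h2).
Proof.
rewrite /lc big_split_ord /=; congr (_ + _).
  by apply: eq_bigr => i _; rewrite /happ /= ltn_ord.
by apply: eq_bigr => i _; rewrite /happ /= ltnNge leq_addr /= addKn.
Qed.

Definition DCC (A B : M -> Prop) :=
  forall Q : nat -> M -> Prop, (forall k, submod (Q k)) ->
    (forall k x, Q k.+1 x -> Q k x) -> (forall k x, B x -> Q k x) ->
    (forall k x, Q k x -> A x) ->
    exists K, forall k, (K <= k)%N -> forall x, Q K x -> Q k x.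

Lemma DCC_mono A B A' B' : DCC A B -> (forall x, A' x -> A x) -> (forall x, B x -> B' x) -> DCC A' B'.
Proof.
move=> H HA HB Q HQ Hd HB' HA'; apply: H => //.
  by move=> k x Hx; apply: HB'; apply: HB.
by move=> k x Hx; apply: HA; apply: HA' Hx.
Qed.

Lemma chain_le (Q : nat -> M -> Prop) : (forall k x, Q k.+1 x -> Q k x) ->
  forall k l x, (k <= l)%N -> Q l x -> Q k x.
Proof.
move=> Hd k l x /subnKC <-; elim: (l - k)%N => [|d IH]; first by rewrite addn0.
by rewrite addnS => H; apply: IH; apply: Hd.
Qed.

Lemma DCC_trans A B C : submod A -> submod B -> (forall x, C x -> B x) -> (forall x, B x -> A x) ->
  DCC A B -> DCC B C -> DCC A C.
Proof.
move=> HA' HB CB BA HAB HBC Q HQ Hd HC HA.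
pose Q1 := (fun k x => exists y z, Q k y /\ B z /\ x = y + z).
have [K1 H1] : exists K, forall k, (K <= k)%N -> forall x, Q1 K x -> Q1 k x.
apply: HAB.
- move=> k; case: (HQ k) => [Q0 [QD QZ]]; case: HB => [B0 [BD BZ]]; split.
    by exists 0, 0; rewrite addr0.
  split.
    move=> x y [a [b [Qa [Bb ->]]]] [a' [b' [Qa' [Bb' ->]]]].
    by exists (a + a'), (b + b'); split; [apply: QD|split; [apply: BD|rewrite addrACA]].
  move=> r x [a [b [Qa [Bb ->]]]]; exists (r *: a), (r *: b); split; [apply: QZ|split; [apply: BZ|rewrite scalerDr]] => //.
- by move=> k x [a [b [Qa [Bb ->]]]]; exists a, b; split=> //; apply: Hd.
- by move=> k x Bx; exists 0, x; split; [case: (HQ k)|rewrite add0r].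
- move=> k x [a [b [Qa [Bb ->]]]]; case: HA' => _ [AD _].
  by apply: AD; [apply: HA Qa| apply: BA].
pose Q2 := (fun k x => Q k x /\ B x).
have [K2 H2] : exists K, forall k, (K <= k)%N -> forall x, Q2 K x -> Q2 k x.
apply: HBC.
- move=> k; case: (HQ k) => [Q0 [QD QZ]]; case: HB => [B0 [BD BZ]]; split; first by [].
  split; first by move=> x y [] ? ? [] ? ?; split; [apply: QD|apply: BD].
  by move=> r x [] ? ?; split; [apply: QZ|apply: BZ].
- by move=> k x [] ? ?; split => //; apply: Hd.
- by move=> k x Cx; split; [apply: HC|apply: CB].
- by move=> k x [].
exists (maxn K1 K2) => k Hk x Qx.
have Hk1 : (K1 <= k)%N by apply: leq_trans Hk; apply: leq_maxl.
have Hk2 : (K2 <= k)%N by apply: leq_trans Hk; apply: leq_maxr.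
have QK1 : Q K1 x by apply: (chain_le Hd) Qx; apply: leq_maxl.
have QK2 : forall y, Q (maxn K1 K2) y -> Q K2 y by move=> y; apply: (chain_le Hd); apply: leq_maxr.
have [a [b [Qa [Bb Hx]]]] : exists y z, Q k y /\ B z /\ x = y + z.
  by apply: H1 => //; exists x, 0; split=> //; split; [case: HB|rewrite addr0].
have Hba : b = x - a by rewrite Hx addrAC subrr add0r.
have Qb : Q k b.
  have : Q K2 b /\ B b.
    split=> //; rewrite Hba; apply: submodB => //; first by apply: QK2.
    by apply: QK2; apply: (chain_le Hd) Qa.
  by move/(H2 k Hk2) => [].
by rewrite Hx; case: (HQ k) => _ [QD _]; apply: QD.
Qed.
End Mod.

From mathcomp Require Import all_boot all_order all_algebra.
From Stdlib Require Import Classical ClassicalEpsilon.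
Set Implicit Arguments. Unset Strict Implicit. Unset Printing Implicit Defensive.

Section B.
Variable R : comNzRingType.
Variable M : lmodType R.

Lemma DCC_two (m : R -> Prop) (B : M -> Prop) h : is_maximal_ideal m -> submod B ->
  (forall a, m a -> B (a *: h)) -> DCC (fun x => exists y r, B y /\ x = y + r *: h) B.
Proof.
move=> [[m0 [mD mM]] [m1 mmax]] HB Hh Q HQ Hd HBQ HA.
case: (classic (forall k, Q k h)) => [Hall|].
  exists 0%N => k _ x Qx; have [y [r [By ->]]] := HA _ _ Qx.
  by case: (HQ k) => _ [QD QZ]; apply: QD; [apply: HBQ|apply: QZ].
move=> /not_all_ex_not [K HK].
have HnK : forall k, (K <= k)%N -> ~ Q k h.
  by move=> k Hk Qh; apply: HK; apply: (chain_le Hd) Qh.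
have HkB : forall k, (K <= k)%N -> forall x, Q k x -> B x.
  move=> k Hk x Qx; have [y [r [By Hx]]] := HA _ _ Qx.
  case: (classic (m r)) => [mr|nmr].
    by rewrite Hx; case: HB => _ [BD _]; apply: BD => //; apply: Hh.
  exfalso; apply: (HnK k Hk).
  pose K' := fun z => exists a s, m a /\ z = a + s * r.
  have HK' : is_ideal K'.
    split; first by exists 0, 0; rewrite mul0r addr0.
    split.
      move=> x1 y1 [a [s [ma ->]]] [a' [s' [ma' ->]]]; exists (a + a'), (s + s').
      by split; [apply: mD|rewrite mulrDl addrACA].
    move=> c z [a [s [ma ->]]]; exists (c * a), (c * s).
    by split; [apply: mM|rewrite mulrDr mulrA].
  case: (mmax K' HK').
  - by move=> z mz; exists z, 0; rewrite mul0r addr0.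
  - by move=> H; exfalso; apply: nmr; apply: H; exists 0, 1; rewrite mul1r add0r.
  move=> [a [s [ma H1]]].
  have -> : h = a *: h + s *: (r *: h) by rewrite scalerA -scalerDl -H1 scale1r.
  have Qrh : Q k (r *: h).
    have -> : r *: h = x - y by rewrite Hx addrAC subrr add0r.
    by apply: submodB => //; apply: HBQ.
  by case: (HQ k) => _ [QD QZ]; apply: QD; [apply: HBQ; apply: Hh|apply: QZ].
exists K => k Hk x QKx; apply: HBQ; apply: (HkB K) => //.
Qed.

Lemma lc_delta n i (h : nat -> M) : (i < n)%N -> lc n (fun j => if j == i then 1 else 0) h = h i.
Proof.
move=> Hi; rewrite /lc (bigD1 (Ordinal Hi)) //= eqxx scale1r big1 ?addr0 //.
by move=> j Hj; rewrite ifF ?scale0r //; apply/negbTE; move: Hj; apply: contra => /eqP Hj; apply/eqP; apply: val_inj.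
Qed.

Lemma fg_gens (N : M -> Prop) n h : (forall x, N x <-> exists c, x = lc n c h) ->
  forall i, (i < n)%N -> N (h i).
Proof. by move=> H i Hi; apply/H; exists (fun j => if j == i then 1 else 0); rewrite lc_delta. Qed.

Lemma span_sub n (h : nat -> M) : submod (fun x => exists c, x = lc n c h).
Proof.
split; first by exists (fun _ => 0); rewrite /lc big1 // => i _; rewrite scale0r.
split; first by move=> x y [c ->] [d ->]; exists (fun i => c i + d i); rewrite lcD.
by move=> a x [c ->]; exists (fun i => a * c i); rewrite lcZ.
Qed.

Lemma zero_lc n (h : nat -> M) : lc n (fun _ => 0) h = 0.
Proof. by rewrite /lc big1 // => i _; rewrite scale0r. Qed.

Lemma DCC_max (m : R -> Prop) (B : M -> Prop) : is_maximal_ideal m -> submod B -> fg B ->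
  DCC B (mprod m B).
Proof.
move=> Hm HB [n [g Hg]].
have Hmi : is_ideal m by case: Hm.
pose Y j x := exists y c, mprod m B y /\ x = y + lc j c g.
have HY : forall j, submod (Y j).
  move=> j; have [P0 [PD PZ]] := mprod_sub B Hmi; split.
    by exists 0, (fun _ => 0); rewrite zero_lc addr0.
  split.
    move=> x y [a [c [Pa ->]]] [a' [c' [Pa' ->]]]; exists (a + a'), (fun i => c i + c' i).
    by split; [apply: PD|rewrite lcD addrACA].
  move=> r x [a [c [Pa ->]]]; exists (r *: a), (fun i => r * c i).
  by split; [apply: PZ|rewrite scalerDr lcZ].
have HYS : forall j x, Y j x -> Y j.+1 x.
  move=> j x [y [c [Py ->]]]; exists y, (fun i => if i == j then 0 else c i); split=> //.
  rewrite lcS eqxx scale0r addr0; congr (_ + _); apply: lc_ext => i Hi.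
  by rewrite ifF //; apply/negbTE; rewrite neq_ltn Hi.
have HY0 : forall j x, Y 0 x -> Y j x.
  move=> j; elim: j => [//|j IH] x /IH; apply: HYS.
have Hstep : forall j, (j < n)%N -> DCC (Y j.+1) (Y j).
  move=> j Hj.
  have H2 := @DCC_two m (Y j) (g j) Hm (HY j).
  apply: (DCC_mono (H2 _)).
  - move=> a ma; exists (a *: g j), (fun _ => 0); rewrite zero_lc addr0; split=> //.
    by apply: fsum_one; exists a, (g j); split=> //; split=> //; apply: (fg_gens Hg).
  - move=> x [y [c [Py ->]]]; exists (y + lc j c g), (c j); split; last by rewrite lcS addrA.
    by exists y, c.
  - by [].
have Hall : forall j, (j <= n)%N -> DCC (Y j) (Y 0).
  elim=> [_|j' IH Hj].
    move=> Q HQ Hd HB0 HA; exists 0%N => k _ x Qx; apply: HB0; apply: HA Qx.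
  apply: (DCC_trans (B := Y j')).
  - exact: HY.
  - exact: HY.
  - exact: HY0.
  - exact: HYS.
  - by apply: Hstep.
  - by apply: IH; apply: ltnW.
apply: DCC_mono (Hall n (leqnn n)) _ _.
  by move=> x /Hg [c ->]; exists 0, c; split; [apply: fs0|rewrite add0r].
by move=> x [y [c [Py ->]]]; rewrite lc0 addr0.
Qed.

End B.

From mathcomp Require Import all_boot all_order all_algebra.
From Stdlib Require Import Classical ClassicalEpsilon.
Set Implicit Arguments. Unset Strict Implicit. Unset Printing Implicit Defensive.

Lemma choice_fun (A B : Type) (P : A -> B -> Prop) : (forall a, exists b, P a b) -> exists f, forall a, P a (f a).
Proof.
move=> H; exists (fun a => proj1_sig (constructive_indefinite_description _ (H a))).
by move=> a; exact: (proj2_sig (constructive_indefinite_description _ (H a))).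
Qed.

Section C.
Variable R : comNzRingType.

Definition natf (V : zmodType) k (F : 'I_k -> V) (j : nat) : V := oapp F 0 (insub j).

Lemma natfE (V : zmodType) k (F : 'I_k -> V) (i : 'I_k) : natf F i = F i.
Proof. by rewrite /natf valK. Qed.

Lemma noeth_nat : noetherian_ring R -> forall I, is_ideal I ->
  exists k (gn : nat -> R), forall r, I r <-> exists c : nat -> R, r = \sum_(i < k) c i * gn i.
Proof.
move=> HN I HI; have [k [g Hg]] := HN I HI; exists k, (natf g) => r; split.
  move=> /Hg [c ->]; exists (natf c); by apply: eq_bigr => i _; rewrite !natfE.
move=> [c ->]; apply/Hg; exists (fun i => c i); by apply: eq_bigr => i _; rewrite !natfE.
Qed.

Variable M : lmodType R.

Lemma fg_nat : fin_gen_module M -> exists n (g : nat -> M), forall x, exists c, x = lc n c g.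
Proof.
move=> [k [g Hg]]; exists k, (natf g) => x; have [c ->] := Hg x.
by exists (natf c); apply: eq_bigr => i _; rewrite !natfE.
Qed.

Lemma subfg (HN : noetherian_ring R) n (g : nat -> M) (N : M -> Prop) :
  submod N -> (forall x, N x -> exists c, x = lc n c g) -> fg N.
Proof.
elim: n N => [|n IH] N HNs HNg.
  exists 0%N, (fun _ => 0) => x; split.
    by move=> /HNg [c ->]; exists c; rewrite !lc0.
  by move=> [c ->]; rewrite lc0; case: HNs.
pose I r := exists c, N (lc n c g + r *: g n).
have HI : is_ideal I.
  split; first by exists (fun _ => 0); rewrite zero_lc scale0r addr0; case: HNs.
  split.
    move=> x y [c Hc] [d Hd]; exists (fun i => c i + d i).
    have -> : lc n (fun i => c i + d i) g + (x + y) *: g n = (lc n c g + x *: g n) + (lc n d g + y *: g n).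
      by rewrite lcD scalerDl addrACA.
    by case: HNs => _ [HD _]; apply: HD.
  move=> a x [c Hc]; exists (fun i => a * c i).
  have -> : lc n (fun i => a * c i) g + (a * x) *: g n = a *: (lc n c g + x *: g n).
    by rewrite scalerDr lcZ scalerA.
  by case: HNs => _ [_ HZ]; apply: HZ.
have [k [gn Hgn]] := noeth_nat HN HI.
have Hwit : forall j, exists d, (j < k)%N -> N (lc n d g + gn j *: g n).
  move=> j; case: (ltnP j k) => Hj; last by exists (fun _ => 0).
  have : I (gn j).
    apply/Hgn; exists (fun i => if i == j then 1 else 0).
    rewrite (bigD1 (Ordinal Hj)) //= eqxx mul1r big1 ?addr0 // => i Hi.
    by rewrite ifF ?mul0r //; apply/negbTE; move: Hi; apply: contra => /eqP Hi; apply/eqP; apply: val_inj.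
  by move=> [d Hd]; exists d.
have [dd Hdd] := choice_fun Hwit.
pose xs j := lc n (dd j) g + gn j *: g n.
pose N' x := N x /\ exists c, x = lc n c g.
have HN' : submod N'.
  have [S0 [SD SZ]] := span_sub n g; case: HNs => [N0 [ND NZ]]; split; first by split.
  split; first by move=> x y [] ? ? [] ? ?; split; [apply: ND|apply: SD].
  by move=> a x [] ? ?; split; [apply: NZ|apply: SZ].
have [n' [h' Hh']] := IH N' HN' (fun x => fun H => proj2 H).
exists (n' + k)%N, (happ n' h' xs) => x; split.
  move=> Nx; have [c Hc] := HNg x Nx.
  have Ic : I (c n) by exists c; rewrite -lcS -Hc.
  have [e He] := (Hgn _).1 Ic.
  pose z := x - lc k e xs.
  have Hxs : lc k e xs = lc n (fun i => \sum_(j < k) e j * dd j i) g + (\sum_(j < k) e j * gn j) *: g n.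
    rewrite /lc /xs; under eq_bigr do rewrite scalerDr.
    rewrite big_split /=; congr (_ + _).
      under eq_bigr do rewrite scaler_sumr.
      rewrite (exchange_big) /=; apply: eq_bigr => i _.
      rewrite scaler_suml; apply: eq_bigr => j _.
      by rewrite scalerA.
    by rewrite scaler_suml; apply: eq_bigr => j _; rewrite scalerA.
  have Nz : N' z.
    split.
      apply: submodB => //; apply: lc_sub => //.
    exists (fun i => c i - \sum_(j < k) e j * dd j i).
    rewrite /z Hxs Hc lcS -He.
    rewrite (_ : lc n (fun i => c i - \sum_(j < k) e j * dd j i) g =
      lc n c g - lc n (fun i => \sum_(j < k) e j * dd j i) g).
      by rewrite opprD addrACA subrr addr0.
    by rewrite lcN -lcD.
  have [c' Hc'] := (Hh' z).1 Nz.
  exists (fun i => if (i < n')%N then c' i else e (i - n')%N).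
  by rewrite -lc_app -Hc' /z subrK.
move=> [c ->]; apply: lc_sub => // i Hi.
rewrite /happ; case: ifP => Hin.
  by have [] := fg_gens Hh' Hin.
rewrite /xs; apply: Hdd.
by rewrite ltn_subLR // leqNgt Hin.
Qed.

End C.

From mathcomp Require Import all_boot all_order all_algebra.
From Stdlib Require Import Classical ClassicalEpsilon FunctionalExtensionality PropExtensionality.
Set Implicit Arguments. Unset Strict Implicit. Unset Printing Implicit Defensive.

Section D.
Variable R : comNzRingType.

Lemma ideal_mulE (I K : R -> Prop) x :
  ideal_mul I K x <-> fsum (fun y => exists a b, I a /\ K b /\ y = a * b) x.
Proof.
split.
  move=> [k [a [b [Ha [Hb ->]]]]]; apply: fsum_big => i; by exists (a i), (b i).
move=> /fsum_to_big [k [F [HF ->]]].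
have Hex : forall i, exists p : R * R, I p.1 /\ K p.2 /\ F i = p.1 * p.2.
  by move=> i; have [a [b [Ia [Kb ->]]]] := HF i; exists (a, b).
have [ab Hab] := choice_fun Hex.
exists k, (fun i => (ab i).1), (fun i => (ab i).2); split; first by move=> i; case: (Hab i).
  split; first by move=> i; case: (Hab i) => _ [].
  by apply: eq_bigr => i _; case: (Hab i) => _ [].
Qed.

Lemma ideal_mul_ideal (I K : R -> Prop) : is_ideal K -> is_ideal (ideal_mul I K).
Proof.
move=> [K0 [KD KM]]; split; first by apply/ideal_mulE; apply: fs0.
split; first by move=> x y /ideal_mulE Hx /ideal_mulE Hy; apply/ideal_mulE; apply: fsum_add.
move=> r x /ideal_mulE Hx; apply/ideal_mulE.
apply: (fsum_morph (f := fun y => r * y)); [by rewrite mulr0|by move=> a b; rewrite mulrDr| |exact: Hx].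
by move=> y [a [b [Ia [Kb ->]]]]; exists a, (r * b); split=> //; split; [apply: KM|rewrite mulrCA].
Qed.

Lemma ideal_mul_le (I K : R -> Prop) x : is_ideal K -> ideal_mul I K x -> K x.
Proof.
move=> [K0 [KD KM]] /ideal_mulE; apply: fsum_closed => // y [a [b [_ [Kb ->]]]]; by apply: KM.
Qed.

Lemma pow_ideal (I : R -> Prop) t : is_ideal (ideal_pow I t).
Proof. by elim: t => [|t IH] /=; [split=> //|apply: ideal_mul_ideal]. Qed.

Lemma pow_mul (I : R -> Prop) t a c : I a -> ideal_pow I t c -> ideal_pow I t.+1 (a * c).
Proof. move=> Ia Hc; apply/ideal_mulE; apply: fsum_one; by exists a, c. Qed.

Lemma pow_le (I : R -> Prop) t u x : (t <= u)%N -> ideal_pow I u x -> ideal_pow I t x.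
Proof.
move=> /subnKC <-; elim: (u - t)%N x => [|d IH] x; first by rewrite addn0.
rewrite addnS /= => H; apply: IH; apply: ideal_mul_le H; apply: pow_ideal.
Qed.

Definition Jr := @jacobson_radical R.

Lemma J_ideal : is_ideal Jr.
Proof.
split; first by move=> I [[I0 _] _].
split; first by move=> x y Hx Hy I HI; case: (HI) => [[_ [ID _]] _]; apply: ID; [apply: Hx|apply: Hy].
by move=> a x Hx I HI; case: (HI) => [[_ [_ IM]] _]; apply: IM; apply: Hx.
Qed.

Variable HN : noetherian_ring R.
Variable HS : semilocal_ring R.
Variable M : lmodType R.
Variable HM : fin_gen_module M.

Definition fnat n (f : 'I_n -> R -> Prop) (j : nat) : R -> Prop :=
  oapp f (fun _ => False) (insub j).

Fixpoint Xch (fn : nat -> R -> Prop) (B : M -> Prop) j : M -> Prop :=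
  match j with
  | 0 => B
  | j.+1 => match excluded_middle_informative (is_maximal_ideal (fn j)) with
            | left _ => mprod (fn j) (Xch fn B j)
            | right _ => Xch fn B j
            end
  end.

Lemma submod_fg (B : M -> Prop) : submod B -> fg B.
Proof.
move=> HB; have [n [g Hg]] := fg_nat HM; apply: (subfg HN (n := n) (g := g)) => //.
Qed.

Lemma DCC_refl (B : M -> Prop) : DCC B B.
Proof. by move=> Q HQ Hd HB HA; exists 0%N => k _ x Qx; apply: HB; apply: HA Qx. Qed.

Lemma DCC_J (B : M -> Prop) : submod B -> DCC B (mprod Jr B).
Proof.
move=> HB; have [n [f Hf]] := HS; pose fn := fnat f.
have Hsub : forall j, submod (Xch fn B j) /\ (forall x, Xch fn B j x -> B x).
  elim=> [|j [IHs IHl]] /=; first by split.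
  case: excluded_middle_informative => Hm; last by split.
  split; first by apply: mprod_sub; case: Hm.
  by move=> x /(mprod_le IHs); apply: IHl.
have Hdcc : forall j, DCC B (Xch fn B j).
  elim=> [|j IH] /=; first exact: DCC_refl.
  case: excluded_middle_informative => Hm //.
  have [Hs Hl] := Hsub j.
  apply: (DCC_trans (B := Xch fn B j)) => //.
  - by move=> x /(mprod_le Hs).
  - by apply: DCC_max => //; apply: submod_fg.
pose P j (c : R) := forall i, (i < j)%N -> is_maximal_ideal (fn i) -> fn i c.
have HP : forall j x, Xch fn B j x -> mprod (P j) B x.
  elim=> [|j IH] x /=.
    by move=> Bx; apply: fsum_one; exists 1, x; split=> //; split; [|rewrite scale1r].
  case: excluded_middle_informative => Hm.
    move=> Hx; apply: fsum_flat; apply: fsum_mono Hx => y [a [z [fa [Xz ->]]]].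
    apply: (fsum_morph (f := fun w => a *: w)); [exact: scaler0|exact: scalerDr| |exact: IH].
    move=> w [c [b [Pc [Bb ->]]]]; exists (a * c), b; split; last by rewrite scalerA.
    move=> i Hi Hmi; case: (ltnP i j) => Hij.
      by case: (Hmi) => [[_ [_ IM]] _]; apply: IM; apply: Pc.
    have Eij : i = j by apply/eqP; rewrite eqn_leq Hij -ltnS Hi.
    by rewrite Eij; case: Hm => [[_ [_ IM]] _]; rewrite mulrC; apply: IM.
  move=> /IH; apply: fsum_mono => y [c [b [Pc [Bb ->]]]]; exists c, b; split=> //.
  move=> i Hi Hmi; case: (ltnP i j) => Hij; first by apply: Pc.
  have Eij : i = j by apply/eqP; rewrite eqn_leq Hij -ltnS Hi.
  by exfalso; apply: Hm; rewrite -Eij.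
have HPJ : forall c, P n c -> Jr c.
  move=> c Pc I HI; have [i Hi] := Hf I HI.
  have EI : I = f i by apply: functional_extensionality => x; apply: propositional_extensionality.
  have Efn : fn i = f i by rewrite /fn /fnat valK.
  by rewrite EI -Efn; apply: Pc => //; rewrite Efn -EI.
apply: DCC_mono (Hdcc n) _ _ => // x /HP; apply: fsum_mono => y [c [b [Pc [Bb ->]]]].
by exists c, b; split=> //; apply: HPJ.
Qed.

Fixpoint Jit t (B : M -> Prop) : M -> Prop :=
  match t with 0 => B | t.+1 => mprod Jr (Jit t B) end.

Definition Lspan n (h : nat -> M) t x := exists c, (forall i, ideal_pow Jr t (c i)) /\ x = lc n c h.

Lemma Lspan_sub n h t : submod (Lspan n h t).
Proof.
have [I0 [ID IM]] := pow_ideal Jr t.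
split; first by exists (fun _ => 0); rewrite zero_lc.
split; first by move=> x y [c [Hc ->]] [d [Hd ->]]; exists (fun i => c i + d i); rewrite lcD; split=> // i; apply: ID.
by move=> a x [c [Hc ->]]; exists (fun i => a * c i); rewrite lcZ; split=> // i; apply: IM.
Qed.

Lemma DCC_Jit (B : M -> Prop) t : submod B -> DCC B (Jit t B).
Proof.
move=> HB.
have Hs : forall t, submod (Jit t B) /\ forall x, Jit t B x -> B x.
  elim=> [|u [IHs IHl]] //=; split; first by apply: mprod_sub; apply: J_ideal.
  by move=> x /(mprod_le IHs); apply: IHl.
elim: t => [|t IH] /=; first exact: DCC_refl.
have [Hs1 Hl1] := Hs t.
apply: (DCC_trans (B := Jit t B)) => //.
- by move=> x /(mprod_le Hs1).
- by apply: DCC_J.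
Qed.

Lemma DCC_L (N : M -> Prop) n h t : submod N -> (forall x, N x <-> exists c, x = lc n c h) ->
  DCC N (Lspan n h t).
Proof.
move=> HNs Hh; have H1 := DCC_Jit (t := t) HNs; apply: (DCC_mono H1) => // x.
clear H1; elim: t x => [|t IH] x /=.
  by move=> /Hh [c ->]; exists c.
apply: submod_fsum; first exact: Lspan_sub.
move=> y [a [z [Ja [Hz ->]]]]; have [c [Hc ->]] := IH z Hz.
by exists (fun i => a * c i); rewrite lcZ; split=> // i; apply: pow_mul.
Qed.

End D.

From mathcomp Require Import all_boot all_order all_algebra zify ring.
From Stdlib Require Import Classical ClassicalEpsilon.
Set Implicit Arguments. Unset Strict Implicit. Unset Printing Implicit Defensive.

Section E.
Variable R : comNzRingType.
Variable HN : noetherian_ring R.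
Variable HS : semilocal_ring R.
Variable HC : adically_complete (@jacobson_radical R).
Variable M : lmodType R.
Variable HM : fin_gen_module M.

Lemma lc_trans n n' (h : nat -> M) h' (Bm : nat -> nat -> R) (a : nat -> R) :
  (forall j, (j < n')%N -> h' j = lc n (Bm j) h) ->
  lc n (fun i => \sum_(j < n') a j * Bm j i) h = lc n' a h'.
Proof.
move=> H; rewrite /lc; under eq_bigr do rewrite scaler_suml.
rewrite exchange_big /=; apply: eq_bigr => j _.
by rewrite H // /lc scaler_sumr; apply: eq_bigr => i _; rewrite scalerA.
Qed.

Lemma Jsep x : (forall n, ideal_pow (@Jr R) n x) -> x = 0.
Proof. by case: HC => H _; apply: H. Qed.

Lemma Jcompl (u : nat -> R) : (forall n, ideal_pow (@Jr R) n (u n.+1 - u n)) ->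
  exists x, forall n, ideal_pow (@Jr R) n (x - u n).
Proof. by case: HC => _ H; apply: H. Qed.

Lemma ideal_sum (I : R -> Prop) n (G : nat -> R) : is_ideal I -> (forall j, (j < n)%N -> I (G j)) ->
  I (\sum_(j < n) G j).
Proof.
move=> [I0 [ID _]] H; elim: n H => [|n IH] H; first by rewrite big_ord0.
by rewrite big_ord_recr; apply: ID; [apply: IH => j Hj; apply: H; apply: ltnW|apply: H].
Qed.

Lemma idealB (I : R -> Prop) x y : is_ideal I -> I x -> I y -> I (x - y).
Proof. by move=> [_ [ID IM]] Hx Hy; apply: ID => //; rewrite -mulN1r; apply: IM. Qed.

Lemma LC (S N : nat -> M -> Prop) :
  (forall k, submod (N k)) -> (forall k, exists y, S k y) -> (forall k y, S k.+1 y -> S k y) ->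
  (forall k y0 y, S k y0 -> (S k y <-> N k (y - y0))) -> exists y, forall k, S k y.
Proof.
move=> HNs Hne HSd Hcos.
have HNd : forall k z, N k.+1 z -> N k z.
  move=> k z Hz; have [y0 Hy0] := Hne k.+1.
  have H1 : S k.+1 (y0 + z) by apply/(Hcos _ _ _ Hy0); rewrite addrAC subrr add0r.
  by have := (Hcos k y0 (y0 + z) (HSd _ _ Hy0)).1 (HSd _ _ H1); rewrite addrAC subrr add0r.
have Hgen : forall k, exists nh : nat * (nat -> M), forall x, N k x <-> exists c, x = lc nh.1 c nh.2.
  move=> k; have [n [h Hh]] := submod_fg HN HM (HNs k); by exists (n, h).
have [gens Hgens] := choice_fun Hgen.
pose nk k := (gens k).1.
pose hk k := (gens k).2.
pose L k t := Lspan (nk k) (hk k) t.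
have HL : forall k t, submod (L k t) by move=> k t; apply: Lspan_sub.
have HLN : forall k t x, L k t x -> N k x.
  move=> k t x [c [_ ->]]; apply: lc_sub => // i Hi; exact: (fg_gens (Hgens k)).
have HNL : forall k x, N k x -> L k 0 x.
  by move=> k x /(Hgens k) [c ->]; exists c.
pose Inv t (st : nat * nat * M) := (st.1.1 <= st.1.2)%N /\ S st.1.2 st.2 /\
  forall k', (st.1.2 <= k')%N -> exists s, S k' s /\ L st.1.1 t (st.2 - s).
pose Rel t (st st' : nat * nat * M) := st'.1.1 = st.1.2 /\ (st.1.2 < st'.1.2)%N /\
  L st.1.1 t (st'.2 - st.2).
have Hstep : forall t st, Inv t st -> exists st', Inv t.+1 st' /\ Rel t st st'.
  move=> t [[p k] y] [/= Hpk [Sky Hy]].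
  pose Q j x := exists a l, N (k + j)%N a /\ L k t.+1 l /\ x = a + l.
  have [j0 Hj0] : exists K, forall j, (K <= j)%N -> forall x, Q K x -> Q j x.
    apply: (DCC_L HN HS HM (t := t.+1) (HNs k) (Hgens k)).
    - move=> j; have [N0 [ND NZ]] := HNs (k + j)%N; have [L0 [LD LZ]] := HL k t.+1; split.
        by exists 0, 0; rewrite addr0.
      split.
        move=> x1 x2 [a [l [Na [Ll ->]]]] [a' [l' [Na' [Ll' ->]]]].
        by exists (a + a'), (l + l'); split; [apply: ND|split; [apply: LD|rewrite addrACA]].
      move=> r x [a [l [Na [Ll ->]]]]; exists (r *: a), (r *: l).
      by split; [apply: NZ|split; [apply: LZ|rewrite scalerDr]].
    - move=> j x [a [l [Na [Ll ->]]]]; exists a, l; split=> //.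
      by apply: HNd; rewrite -addnS.
    - move=> j x Lx; exists 0, x; split; first by case: (HNs (k + j)%N).
      by split=> //; rewrite add0r.
    - move=> j x [a [l [Na [Ll ->]]]]; case: (HNs k) => _ [ND _]; apply: ND.
        by apply: (chain_le HNd (leq_addr j k)).
      exact: HLN Ll.
  pose K := (k + j0).+1.
  have [s [SKs Ls]] := Hy K (leq_trans (leq_addr j0 k) (leqnSn _)).
  exists (k, K, s); split; last first.
    split=> //; split; first by rewrite /K ltnS leq_addr.
    by rewrite -opprB; apply: submodN.
  split=> /=; first by apply: ltnW; rewrite /K ltnS leq_addr.
  split=> // k' Hk'.
  have [s' Ss'] := Hne k'.
  have SKs' : S K s' by apply: (chain_le HSd Hk').
  have Hdiff : N K (s - s') by apply/(Hcos _ _ _ SKs').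
  have HQ : Q (k' - k)%N (s - s').
    apply: (Hj0 (k' - k)%N).
      by move: Hk'; rewrite /K; lia.
    exists (s - s'), 0; rewrite addr0; split; first by apply: HNd.
    by split=> //; case: (HL k t.+1).
  move: HQ => [a [l [Na [Ll Hsl]]]].
  rewrite subnKC in Na; last by move: Hk'; rewrite /K; lia.
  exists (s' + a); split.
    by apply/(Hcos _ _ _ Ss'); rewrite addrAC subrr add0r.
  by have -> : s - (s' + a) = l by rewrite opprD addrA Hsl addrAC subrr add0r.
have Hnext : forall ts : nat * (nat * nat * M), exists st', Inv ts.1 ts.2 -> Inv ts.1.+1 st' /\ Rel ts.1 ts.2 st'.
  move=> [t st]; case: (classic (Inv t st)) => H.
    by have [st' Hst'] := Hstep t st H; exists st'.
  by exists st.
have [next Hnx] := choice_fun Hnext.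
have [y0 Sy0] := Hne 0%N.
pose stf := fix stf t := match t with 0 => (0%N, 0%N, y0) | t'.+1 => next (t', stf t') end.
have Hinv : forall t, Inv t (stf t).
  elim=> [|t IH]; last by exact: (Hnx (t, stf t) IH).1.
  split=> //; split=> // k' _ /=.
  have [s Ss] := Hne k'; exists s; split=> //; apply: HNL.
  by apply/(Hcos 0%N s y0) => //; apply: (chain_le HSd (leq0n k')).
have Hrel : forall t, Rel t (stf t) (stf t.+1) := fun t => (Hnx (t, stf t) (Hinv t)).2.
pose p t := (stf t).1.1.
pose kk t := (stf t).1.2.
pose y t := (stf t).2.
have Hp1 : forall t, p t.+1 = kk t by move=> t; case: (Hrel t).
have Hkk : forall t, (kk t < kk t.+1)%N by move=> t; case: (Hrel t) => _ [].
have Hkt : forall t, (t <= kk t)%N.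
  by elim=> // t IH; apply: leq_ltn_trans IH (Hkk t).
have Hpk : forall t, (p t <= kk t)%N by move=> t; case: (Hinv t).
have Hpm : forall t, (p t <= p t.+1)%N by move=> t; rewrite Hp1.
have Hd : forall t, L (p t) t (y t.+1 - y t) by move=> t; case: (Hrel t) => _ [].
have [e He] := choice_fun Hd.
pose nn t := nk (p t).
pose hh t := hk (p t).
have HBm : forall tj : nat * nat, exists row, (tj.2 < nn tj.1.+1)%N ->
    hh tj.1.+1 tj.2 = lc (nn tj.1) row (hh tj.1).
  move=> [t j]; case: (ltnP j (nn t.+1)) => /= Hj; last by exists (fun _ => 0).
  have H1 : N (p t.+1) (hh t.+1 j) by apply: (fg_gens (Hgens (p t.+1))).
  have H2 : N (p t) (hh t.+1 j) by apply: (chain_le HNd (Hpm t)).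
  by have [c Hc] := (Hgens (p t) _).1 H2; exists c.
have [Bm0 HBm0] := choice_fun HBm.
pose Bm t j := Bm0 (t, j).
have HBt : forall t j, (j < nn t.+1)%N -> hh t.+1 j = lc (nn t) (Bm t j) (hh t).
  by move=> t j Hj; apply: (HBm0 (t, j)).
have JI := J_ideal R.
have JpI : forall t, is_ideal (ideal_pow (@Jr R) t) by move=> t; apply: pow_ideal.
pose F := fix F u t {struct u} : nat -> R := match u with
  | 0 => e t
  | u'.+1 => fun i => \sum_(j < nn t.+1) F u' t.+1 j * Bm t j i end.
have HF : forall u t i, ideal_pow (@Jr R) (t + u) (F u t i).
  elim=> [|u IH] t i /=; first by rewrite addn0; case: (He t).
  apply: (ideal_sum (G := fun j => F u t.+1 j * Bm t j i)) => // j _.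
  rewrite mulrC; case: (JpI (t + u.+1)%N) => _ [_ IM]; apply: IM.
  by rewrite addnS -addSn; apply: IH.
pose P U t i := \sum_(u < U) F u t i.
have HP : forall U t i, P U.+1 t i = e t i + \sum_(j < nn t.+1) P U t.+1 j * Bm t j i.
  move=> U t i; rewrite /P big_ord_recl /=; congr (_ + _).
  under [in RHS]eq_bigr do rewrite mulr_suml.
  by rewrite exchange_big.
have Hcompl : forall ti : nat * nat, exists c, forall U, ideal_pow (@Jr R) U (c - P U ti.1 ti.2).
  move=> [t i]; apply: Jcompl => U /=.
  rewrite /P big_ord_recr /= addrAC subrr add0r.
  by apply: (pow_le (leq_addl t U)); apply: HF.
have [c0 Hc0] := choice_fun Hcompl.
pose c t i := c0 (t, i).
have Hc : forall t i, c t i = e t i + \sum_(j < nn t.+1) c t.+1 j * Bm t j i.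
  move=> t i; apply/eqP; rewrite -subr_eq0; apply/eqP; apply: Jsep => U.
  have -> : c t i - (e t i + \sum_(j < nn t.+1) c t.+1 j * Bm t j i) =
    (c t i - P U.+1 t i) - \sum_(j < nn t.+1) (c t.+1 j - P U t.+1 j) * Bm t j i.
    rewrite HP; under [X in _ = _ - X]eq_bigr do rewrite mulrBl.
    by rewrite sumrB; ring.
  apply: idealB; first exact: JpI.
  - by apply: (pow_le (leqnSn U)); apply: (Hc0 (t, i)).
  - apply: (ideal_sum (G := fun j => (c t.+1 j - P U t.+1 j) * Bm t j i)) => // j _.
    rewrite mulrC; case: (JpI U) => _ [_ IM]; apply: IM.
    exact: (Hc0 (t.+1, j)).
pose w t := lc (nn t) (c t) (hh t).
have Hw : forall t, w t = (y t.+1 - y t) + w t.+1.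
  move=> t; case: (He t) => _ ->; rewrite /w (lc_ext (d := fun i => e t i + \sum_(j < nn t.+1) c t.+1 j * Bm t j i)); last by move=> i _; apply: Hc.
  rewrite lcD; congr (_ + _); apply: lc_trans.
  exact: HBt.
have Hwn : forall t, N (p t) (w t).
  move=> t; apply: lc_sub => // i Hi; exact: (fg_gens (Hgens (p t))).
pose yy := y 0%N + w 0%N.
have Hyy : forall t, yy = y t + w t.
  elim=> // t IH; rewrite IH Hw addrA; congr (_ + _); by rewrite addrC subrK.
exists yy => k.
have Hpt : (k <= p k.+1)%N by rewrite Hp1.
apply: (chain_le HSd Hpt).
have Syt : S (p k.+1) (y k.+1).
  by apply: (chain_le HSd (Hpk k.+1)); case: (Hinv k.+1) => _ [].
apply/(Hcos _ _ _ Syt); rewrite (Hyy k.+1) addrAC subrr add0r; exact: Hwn.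
Qed.

End E.

From mathcomp Require Import all_boot all_order all_algebra zify.
From Stdlib Require Import Classical ClassicalEpsilon Eqdep_dec PeanoNat.
Set Implicit Arguments. Unset Strict Implicit. Unset Printing Implicit Defensive.

Definition upd (T : nat -> Type) (c : forall i, T i) (k : nat) (v : T k) : forall i, T i :=
  fun i => match Nat.eq_dec k i with left e => eq_rect k T v i e | right _ => c i end.
Arguments upd {T} c k v i.

Lemma upd_eq (T : nat -> Type) (c : forall i, T i) k v : upd c k v k = v.
Proof.
rewrite /upd; case: (Nat.eq_dec k k) => [e|//].
by rewrite (UIP_refl_nat _ e).
Qed.

Lemma upd_neq (T : nat -> Type) (c : forall i, T i) k v i : k <> i -> upd c k v i = c i.
Proof. by rewrite /upd; case: (Nat.eq_dec k i). Qed.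

Section F.
Variable R : comNzRingType.
Variable D : Bdiagram R.

Local Unset Implicit Arguments.
Fixpoint reach (b : nat -> bool) (m0 : Bmod D [::]) (n : nat) : Bmod D (ray_vertex b n) -> Prop :=
  match n return Bmod D (ray_vertex b n) -> Prop with
  | 0 => fun x => x = m0
  | n'.+1 => fun x => exists y, reach b m0 n' y /\ mu_rel D (ray_vertex b n') (b n') x y
  end.
Local Set Implicit Arguments.

Lemma reach_chain b m0 n x : reach b m0 n x -> exists c : forall i, Bmod D (ray_vertex b i),
  c 0%N = m0 /\ c n = x /\ forall i, (i < n)%N -> mu_rel D (ray_vertex b i) (b i) (c i.+1) (c i).
Proof.
elim: n x => [|n IH] x /=.
  move=> ->; exists (upd (T := fun i => Bmod D (ray_vertex b i)) (fun i => 0) 0%N m0).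
  by rewrite upd_eq.
move=> [y [Hy Hr]]; have [c [c0 [cn Hc]]] := IH y Hy.
exists (upd (T := fun i => Bmod D (ray_vertex b i)) c n.+1 x).
split; first by rewrite upd_neq.
split; first by rewrite upd_eq.
move=> i Hi; case: (ltnP i n) => Hin.
  rewrite !upd_neq; [by apply: Hc| |]; lia.
have -> : i = n by lia.
by rewrite upd_eq upd_neq ?cn //; lia.
Qed.

Lemma chain_reach b m0 n (c : forall i, Bmod D (ray_vertex b i)) :
  c 0%N = m0 -> (forall i, (i < n)%N -> mu_rel D (ray_vertex b i) (b i) (c i.+1) (c i)) ->
  reach b m0 n (c n).
Proof.
move=> c0 Hc; suff : forall k, (k <= n)%N -> reach b m0 k (c k) by apply.
elim=> [//|k IH] Hk /=; exists (c k); split; first by apply: IH; apply: ltnW.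
by apply: Hc.
Qed.

Lemma mu_le_reach b m0 n (S : Bmod D (ray_vertex b n) -> Prop) :
  mu_le D b n S m0 <-> exists x, reach b m0 n x /\ S x.
Proof.
split.
  by move=> [c [c0 [Sc Hc]]]; exists (c n); split=> //; apply: chain_reach.
move=> [x [Hx Sx]]; have [c [c0 [cn Hc]]] := reach_chain Hx.
by exists c; split=> //; rewrite cn.
Qed.

Definition castv s s' (e : s = s') (x : Bmod D s) : Bmod D s' := eq_rect s (Bmod D) x s' e.

Lemma cast_fam (P : forall s, Bmod D s -> Prop) s s' (e : s = s') x : P s x <-> P s' (castv e x).
Proof. by case: s' / e. Qed.

Lemma cast_surj s s' (e : s = s') (x' : Bmod D s') : exists x, x' = castv e x.
Proof. by case: s' / e x'; move=> x'; exists x'. Qed.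

Lemma step_transport s s' (e : s = s') c c' (ec : c = c') (C : Bmod D s -> Prop) (C' : Bmod D s' -> Prop) :
  (forall y, C y <-> C' (castv e y)) ->
  exists e' : rcons s c = rcons s' c', forall x,
    (exists y, C y /\ mu_rel D s c x y) <-> (exists y', C' y' /\ mu_rel D s' c' (castv e' x) y').
Proof.
case: s' / e C'; case: c' / ec => C' HC; exists erefl => x /=; split.
  by move=> [y [Cy Hr]]; exists y; split=> //; apply/HC.
by move=> [y [Cy Hr]]; exists y; split=> //; apply/HC.
Qed.

Lemma reach_local b b' m0 n : (forall i, (i < n)%N -> b i = b' i) ->
  exists e : ray_vertex b n = ray_vertex b' n, forall x, reach b m0 n x <-> reach b' m0 n (castv e x).
Proof.
elim: n => [|n IH] H; first by exists erefl.
have [e He] := IH (fun i Hi => H i (ltnW Hi)).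
have [e' He'] := step_transport (H n (ltnSn n)) He.
by exists e'.
Qed.

Definition Qp b m0 n := exists x, reach b m0 n x /\ im_Mho D (ray_vertex b n) x.

Lemma Qp_local b b' m0 n : (forall i, (i < n)%N -> b i = b' i) -> Qp b m0 n <-> Qp b' m0 n.
Proof.
move=> H; have [e He] := reach_local m0 H; split.
  move=> [x [Rx Ix]]; exists (castv e x); split; first by apply/He.
  exact: ((cast_fam (fun s y => im_Mho D s y) e x).1 Ix).
move=> [x' [Rx Ix]]; have [x Ex] := cast_surj e x'; subst x'; exists x; split; first by apply/He.
exact: ((cast_fam (fun s y => im_Mho D s y) e x).2 Ix).
Qed.

Definition decb b m0 n : bool := if excluded_middle_informative (Qp b m0 n) then false else true.

Local Unset Implicit Arguments.
Fixpoint pre m0 n : nat -> bool :=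
  match n with
  | 0 => fun _ => true
  | n'.+1 => fun i => if (i < n')%N then pre m0 n' i else decb (pre m0 n') m0 n'
  end.
Local Set Implicit Arguments.

Lemma greedy_exists m0 : exists b : nat -> bool, forall n, b n = false <-> Qp b m0 n.
Proof.
pose b i := pre m0 i.+1 i.
have Hb : forall n i, (i < n)%N -> pre m0 n i = b i.
  elim=> [//|n IH] i Hi /=; case: ifP => Hin; first by apply: IH.
  have -> : i = n by lia.
  by rewrite /b /= ltnn.
exists b => n.
have -> : b n = decb (pre m0 n) m0 n by rewrite /b /= ltnn.
rewrite (Qp_local m0 (b' := pre m0 n)); last by move=> i Hi; rewrite Hb.
by rewrite /decb; case: excluded_middle_informative.
Qed.

End F.

From mathcomp Require Import all_boot all_order all_algebra zify.
From Stdlib Require Import Classical ClassicalEpsilon.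
Set Implicit Arguments. Unset Strict Implicit. Unset Printing Implicit Defensive.

Arguments reach {R} D b m0 n _.

Section G.
Variable R : comNzRingType.
Variable D : Bdiagram R.

Lemma rel_lin s c (a : R) x1 y1 x2 y2 : mu_rel D s c x1 y1 -> mu_rel D s c x2 y2 ->
  mu_rel D s c (a *: x1 + x2) (a *: y1 + y2).
Proof. by case: c x1 x2 => x1 x2 /= -> ->; rewrite linearP. Qed.

Lemma rel_0 s c : mu_rel D s c 0 0.
Proof. by case: c => /=; rewrite linear0. Qed.

Lemma rel_add s c x1 y1 x2 y2 : mu_rel D s c x1 y1 -> mu_rel D s c x2 y2 ->
  mu_rel D s c (x1 + x2) (y1 + y2).
Proof. by move=> H1 H2; have := rel_lin 1 H1 H2; rewrite !scale1r. Qed.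

Lemma rel_scale s c (a : R) x y : mu_rel D s c x y -> mu_rel D s c (a *: x) (a *: y).
Proof. by move=> H; have := rel_lin a H (rel_0 s c); rewrite !addr0. Qed.

Lemma rel_sub s c x1 y1 x2 y2 : mu_rel D s c x1 y1 -> mu_rel D s c x2 y2 ->
  mu_rel D s c (x1 - x2) (y1 - y2).
Proof. by move=> H1 H2; have := rel_add H1 (rel_scale (-1) H2); rewrite !scaleN1r. Qed.

Definition ext b i (x : Bmod D (ray_vertex b i)) k :=
  exists c : forall j, Bmod D (ray_vertex b j), c i = x /\
    forall j, (i <= j)%N -> (j < i + k)%N -> mu_rel D (ray_vertex b j) (b j) (c j.+1) (c j).
Arguments ext b i x k : clear implicits.

Lemma ext_0 b i k : ext b i 0 k.
Proof. by exists (fun _ => 0); split=> // j _ _; apply: rel_0. Qed.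

Lemma ext_add b i x1 x2 k : ext b i x1 k -> ext b i x2 k -> ext b i (x1 + x2) k.
Proof.
move=> [c1 [e1 H1]] [c2 [e2 H2]]; exists (fun j => c1 j + c2 j); split; first by rewrite e1 e2.
by move=> j Hj1 Hj2; apply: rel_add; [apply: H1|apply: H2].
Qed.

Lemma ext_scale b i (a : R) x k : ext b i x k -> ext b i (a *: x) k.
Proof.
move=> [c1 [e1 H1]]; exists (fun j => a *: c1 j); split; first by rewrite e1.
by move=> j Hj1 Hj2; apply: rel_scale; apply: H1.
Qed.

Lemma ext_sub b i x1 x2 k : ext b i x1 k -> ext b i x2 k -> ext b i (x1 - x2) k.
Proof. by move=> H1 H2; apply: ext_add => //; rewrite -scaleN1r; apply: ext_scale. Qed.

Variable HN : noetherian_ring R.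
Variable HS : semilocal_ring R.
Variable HC : adically_complete (@jacobson_radical R).
Variable Hfg : forall s, fin_gen_module (Bmod D s).

Lemma good_step b i (x : Bmod D (ray_vertex b i)) : (forall k, ext b i x k) ->
  exists y : Bmod D (ray_vertex b i.+1), mu_rel D (ray_vertex b i) (b i) y x /\ forall k, ext b i.+1 y k.
Proof.
move=> Hx.
pose S k (y : Bmod D (ray_vertex b i.+1)) := mu_rel D (ray_vertex b i) (b i) y x /\ ext b i.+1 y k.
pose N k (z : Bmod D (ray_vertex b i.+1)) := mu_rel D (ray_vertex b i) (b i) z 0 /\ ext b i.+1 z k.
have [y Hy] : exists y, forall k, S k y.
  apply: (LC HN HS HC (Hfg _) (N := N)).
  - move=> k; split; first by split; [apply: rel_0|apply: ext_0].
    split.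
      by move=> z1 z2 [r1 e1] [r2 e2]; split; [rewrite -[0]addr0; apply: rel_add|apply: ext_add].
    by move=> a z [r1 e1]; split; [rewrite -(scaler0 _ a); apply: rel_scale|apply: ext_scale].
  - move=> k; have [c [ci Hc]] := Hx k.+1; exists (c i.+1); split.
      by have := Hc i (leqnn i) ltac:(lia); rewrite ci.
    exists c; split=> // j Hj1 Hj2; apply: Hc; lia.
  - move=> k y [r [c [ci Hc]]]; split=> //; exists c; split=> // j Hj1 Hj2; apply: Hc => //; lia.
  - move=> k y0 y [r0 e0]; split.
      move=> [r e]; split; last by apply: ext_sub.
      by rewrite -(subrr x); apply: rel_sub.
    move=> [r e]; split.
      by have := rel_add r r0; rewrite subrK add0r.
    by have := ext_add e e0; rewrite subrK.
exists y; split; first by case: (Hy 0%N).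
by move=> k; case: (Hy k).
Qed.

Lemma inf_chain b (m0 : Bmod D [::]) : (forall n, exists x, reach D b m0 n x) ->
  exists ms : forall i, Bmod D (ray_vertex b i),
    ms 0%N = m0 /\ forall i, mu_rel D (ray_vertex b i) (b i) (ms i.+1) (ms i).
Proof.
move=> Hr.
have H0 : forall k, ext b 0 m0 k.
  move=> k; have [x Hx] := Hr k; have [c [c0 [ck Hc]]] := reach_chain Hx.
  by exists c; split=> // j _ Hj; apply: Hc.
have Hst : forall i (x : Bmod D (ray_vertex b i)), (forall k, ext b i x k) ->
    {y : Bmod D (ray_vertex b i.+1) | mu_rel D (ray_vertex b i) (b i) y x /\ forall k, ext b i.+1 y k}.
  by move=> i x Hx; apply: constructive_indefinite_description; apply: good_step.
pose build := fix build (i : nat) : {x : Bmod D (ray_vertex b i) | forall k, ext b i x k} :=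
  match i as i0 return {x : Bmod D (ray_vertex b i0) | forall k, ext b i0 x k} with
  | 0 => exist _ m0 H0
  | i'.+1 => let s := build i' in
      let t := Hst i' (proj1_sig s) (proj2_sig s) in
      exist _ (proj1_sig t) (proj2 (proj2_sig t))
  end.
exists (fun i => proj1_sig (build i)); split=> // i /=.
exact: (proj1 (proj2_sig (Hst i _ _))).
Qed.

End G.

From mathcomp Require Import all_boot all_order all_algebra zify.
From Stdlib Require Import Classical ClassicalEpsilon.
Set Implicit Arguments. Unset Strict Implicit. Unset Printing Implicit Defensive.

Arguments reach {R} D b m0 n _.

Section H.
Variable R : comNzRingType.
Variable D : Bdiagram R.

Lemma G1 s c (C : Bmod D s -> Prop) : c = true -> (exists x, C x /\ ker_Omega D s x) ->
  exists y, C y /\ mu_rel D s c 0 y.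
Proof. by case: c => // _ [x [Cx Kx]]; exists x; split=> //=; rewrite Kx. Qed.

Lemma G2 s c (C : Bmod D s -> Prop) : c = false -> (exists x, C x /\ im_Mho D s x) -> ~ C 0 ->
  (exists x, exists y, C y /\ mu_rel D s c x y) /\ ~ (exists y, C y /\ mu_rel D s c 0 y).
Proof.
case: c => // _ [x [Cx [z Hz]]] HC0; split; first by exists z, x; split=> //=; rewrite Hz.
by move=> [y [Cy /= Hy]]; apply: HC0; move: Cy; rewrite Hy linear0.
Qed.

Lemma G3 s c (C : Bmod D s -> Prop) : c = true -> (exists x, C x) -> ~ (exists x, C x /\ ker_Omega D s x) ->
  (exists x, exists y, C y /\ mu_rel D s c x y) /\ ~ (exists y, C y /\ mu_rel D s c 0 y).
Proof.
case: c => // _ [x Cx] HK; split; first by exists (BOmega D s x), x.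
by move=> [y [Cy /= Hy]]; apply: HK; exists y; split=> //; rewrite /ker_Omega -Hy.
Qed.

End H.

Unset Implicit Arguments. Set Strict Implicit.

Theorem theorem5p17 (R : comNzRingType)
  (HR_noeth : noetherian_ring R) (HR_semiloc : semilocal_ring R)
  (HR_compl : adically_complete (@jacobson_radical R))
  (D : Bdiagram R)
  (Hfg : forall s, fin_gen_module (Bmod D s))
  (Himker : forall s (y : Bmod D (rcons s false)), BOmega D s (BMho D s y) = 0)
  (m : Bmod D [::]) (Hm : m != 0) :
  exists b : nat -> bool,
    let P1 := exists j : nat,
        mu_le D b j (ker_Omega D (ray_vertex b j)) m /\
        ~ mu_le D b j (im_Mho D (ray_vertex b j)) m in
    let P2 := (exists ms : forall i, Bmod D (ray_vertex b i),
                  ms 0%N = m /\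
                  forall i, mu_rel D (ray_vertex b i) (b i) (ms i.+1) (ms i)) /\
              ~ (exists i : nat, mu_le D b i (zero_set D (ray_vertex b i)) m) in
    (P1 /\ ~ P2) \/ (~ P1 /\ P2).
Proof.
have [b Hb] := greedy_exists (D := D) m.
exists b; cbv zeta.
case: (classic (exists n, (exists x, reach D b m n x /\ ker_Omega D (ray_vertex b n) x) /\ ~ Qp b m n))
  => [[n [Hk HQ]]|HnB].
  left; split.
    exists n; split; first by apply/mu_le_reach.
    by move/mu_le_reach.
  move=> [_ Hz]; apply: Hz; exists n.+1; apply/mu_le_reach; exists 0; split=> //.
  have E : b n = true by case E: (b n) => //; exfalso; apply: HQ; apply/Hb.
  exact: (G1 E Hk).
right.
have Hall : forall n, (exists x, reach D b m n x) /\ ~ reach D b m n 0.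
  elim=> [|n [Hne Hn0]].
    by split; [exists m|move=> /= H; move: Hm; rewrite -H eqxx].
  case E: (b n).
    have HQ : ~ Qp b m n by move=> /Hb; rewrite E.
    apply: (G3 E Hne) => Hker; apply: HnB; exists n; split=> //.
  by apply: (G2 E _ Hn0); apply/Hb.
split.
  move=> [j [Hk Hi]]; apply: HnB; exists j; split; first by apply/mu_le_reach.
  by move=> HQ; apply: Hi; apply/mu_le_reach.
split; first by apply: (inf_chain HR_noeth HR_semiloc HR_compl Hfg) => n; case: (Hall n).
move=> [i /mu_le_reach [x [Hx Hz]]]; rewrite /zero_set in Hz; rewrite Hz in Hx.
by case: (Hall i) => _; apply.
Qed.
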